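(* Let $G$ be a noncyclic finite $p$-group and $N$ a nontrivial normal subgroup of $G$ such that $\eta(G) = \eta(G/N)$. Then: (i) for every normal subgroup $M$ of $G$, either $N \le M$ or $M \subseteq G^-$; (ii) if there exists a maximal cyclic subgroup $\langle x \rangle$ of $G$ that is normal in $G$, then $N \le \langle x \rangle$; in particular $N$ is cyclic.
   Context: A cyclic subgroup $C$ of a group $G$ is maximal cyclic if there is no cyclic subgroup $D$ of $G$ with $C < D$. $\eta(G)$ denotes the number of conjugacy classes of maximal cyclic subgroups of $G$. $G^- = \{ g \in G : \langle g \rangle \text{ is not maximal cyclic in } G\}$. *)

(* Defs.v *)
From mathcomp Require Import all_boot all_fingroup all_solvable.
Set Implicit Arguments. Unset Strict Implicit. Unset Printing Implicit Defensive.
Local Open Scope group_scope.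

Section MaxCyclic.
Variable gT : finGroupType.
Implicit Types G C : {set gT}.

Definition max_cyclic (G C : {set gT}) : bool :=
  [max C of D | cyclic D && (D \subset G)].

Definition max_cyclics (G : {set gT}) : {set {set gT}} :=
  [set C : {set gT} | max_cyclic G C].

Definition eta (G : {set gT}) : nat :=
  #|[set C :^: G | C in max_cyclics G]|.

Definition Gminus (G : {set gT}) : {set gT} :=
  [set g in G | ~~ max_cyclic G <[g]>].
End MaxCyclic.

(* Main.v *)
Require Import Defs.
From mathcomp Require Import all_boot all_fingroup all_solvable.
From mathcomp Require Import zify.
Local Open Scope group_scope.

Lemma mc_group {gT : finGroupType} {G C : {set gT}} :
  max_cyclic G C -> group_set C.
Proof. by move/maxsetp/andP=> []. Qed.

Lemma mcJ {gT : finGroupType} {G : {group gT}} {H : {set gT}} {z} :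
  max_cyclic G H -> z \in G -> max_cyclic G (H :^ z).
Proof.
move=> mcH Gz; have gH := mc_group mcH.
move: mcH; rewrite -[H]/(gval (Group gH)); set HG := Group gH => mcH.
case/maxgroupP: mcH => [/andP[cH sHG] maxH].
apply/(@maxgroupP _ _ (HG :^ z)%G); split.
  rewrite /=; move: cH sHG; rewrite /HG /= => cH sHG.
  apply/andP; split; first by move: (cyclicJ HG z) => /= ->.
  by rewrite -(conjGid Gz) conjSg.
move=> K /andP[cK sKG] sHK.
have eK : K :^ z^-1 :=: HG.
  apply: (maxH (K :^ z^-1)%G); last by rewrite /= -sub_conjg.
  apply/andP; split; first by move: (cyclicJ K z^-1) => /= ->.
  by rewrite /= -(conjGid (groupVr Gz)) conjSg.
have := congr1 (fun A => A :^ z) eK; rewrite /= conjsgKV => ->.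
by [].
Qed.

Lemma mc_exists {gT : finGroupType} {G : {group gT}} {x} :
  x \in G -> exists2 D : {group gT}, max_cyclic G D & x \in D.
Proof.
move=> Gx.
have gP : cyclic <[x]> && (<[x]> \subset G) by rewrite cycle_cyclic cycle_subG.
have [D maxD sxD] := @maxgroup_exists _ (fun D => cyclic D && (D \subset G)) <[x]>%G gP.
by exists D => //; rewrite -cycle_subG.
Qed.

Lemma self_conj {gT : finGroupType} (G : {group gT}) (A : {set gT}) :
  A \in A :^: G.
Proof. by apply/imsetP; exists 1; rewrite ?group1 ?conjsg1. Qed.

Lemma key {gT : finGroupType} {G N : {group gT}} :
  N <| G -> eta G = eta (G / N) ->
  forall x n, x \in G -> max_cyclic G <[x]> -> n \in N ->
  exists2 g, g \in G & x * n \in <[x]> :^ g.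
Proof.
move=> nsNG eqeta.
have nNG := normal_norm nsNG; have sNG := normal_sub nsNG.
pose S := max_cyclics G.
pose k := fun C : {set gT} => C :^: G.
pose h := fun C : {set gT} => (C / N) :^: (G / N).
pose T := [set C in S | max_cyclic (G / N) (C / N)].
have TS : T \subset S by apply/subsetP => C; rewrite inE => /andP[].
have hk : forall C D, k C = k D -> h C = h D.
  move=> C D eqk; have : D \in k C by rewrite eqk self_conj.
  case/imsetP => g Gg ->.
  rewrite /h quotientJ ?(subsetP nNG) // conjugates_conj lcoset_id //.
  exact: mem_quotient.
pose h0 := fun Y => h (odflt set0 [pick C in T | k C == Y]).
have h0k : {in T, forall C, h0 (k C) = h C}.
  move=> C TC; rewrite /h0; case: pickP => [C' /andP[TC' /eqP kC'] | /(_ C)].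
    by apply: hk.
  by rewrite TC eqxx.
have hT : h @: T = h0 @: (k @: T).
  rewrite -imset_comp; apply: eq_in_imset => C TC /=; by rewrite h0k.
have surj : [set E :^: (G/N) | E in max_cyclics (G/N)] \subset h @: T.
  apply/subsetP => X /imsetP[E]; rewrite inE => mcE ->.
  have /andP[gE /andP[cE sE]] := maxsetp mcE.
  move: cE sE; rewrite /= (gen_set_id gE) => cE sE.
  case/cyclicP: (cE) => e defE.
  have : e \in G / N by rewrite (subsetP sE) // defE cycle_id.
  case/morphimP => y Ny Gy defe.
  have [D mcD yD] := mc_exists Gy.
  have eqD : D / N = E.
    move: mcE; rewrite -[E]/(gval (Group gE)) => mcE.
    case/maxgroupP: mcE => _ maxE.
    have /andP[cD sDG] := maxgroupp mcD.
    apply: (maxE (D / N)%G).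
      by rewrite /= quotient_cyclic // quotientS.
    by rewrite /= defE defe -quotient_cycle // quotientS // cycle_subG.
  apply/imsetP; exists (gval D); last by rewrite /h eqD.
  by rewrite !inE mcD eqD.
have le0 := subset_leq_card surj.
have le1 := leq_imset_card h0 (k @: T).
have le2 : #|k @: T| <= #|k @: S| := subset_leq_card (imsetS k TS).
have E0 : #|k @: S| = #|[set E :^: (G/N) | E in max_cyclics (G/N)]| := eqeta.
rewrite hT in le0.
have e1 : #|h0 @: (k @: T)| = #|k @: T| by lia.
have e2 : #|k @: T| = #|k @: S| by lia.
have injh0 : {in k @: T &, injective h0} by apply/imset_injP; rewrite e1.
have eqkT : k @: T = k @: S by apply/eqP; rewrite eqEcard imsetS // e2 leqnn.
move=> x n Gx mcx Nn.
have Sx : <[x]> \in S by rewrite inE.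
have Tx : <[x]> \in T.
  have : k <[x]> \in k @: T by rewrite eqkT imset_f.
  case/imsetP => C' TC' eqk.
  have : <[x]> \in k C' by rewrite -eqk self_conj.
  case/imsetP => g Gg ->.
  move: TC'; rewrite !inE => /andP[SC' mcC'].
  rewrite (mcJ SC' Gg) /= quotientJ ?(subsetP nNG) //.
  exact: (mcJ mcC' (mem_quotient _ Gg)).
have Nx : x \in 'N(N) := subsetP nNG x Gx.
have Nn' : n \in 'N(N) := subsetP nNG n (subsetP sNG n Nn).
have Gy : x * n \in G by rewrite groupM // (subsetP sNG).
have [D mcD yD] := mc_exists Gy.
have cy : coset N (x * n) = coset N x by rewrite morphM //= (coset_id Nn) mulg1.
have mcxN : max_cyclic (G / N) (<[x]> / N) by move: Tx; rewrite !inE => /andP[].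
have eqD : D / N = <[x]> / N.
  move/(@maxgroupP _ _ (<[x]> / N)%G): (mcxN) => [_ maxC].
  have /andP[cD sDG] := maxgroupp mcD.
  apply: (maxC (D / N)%G).
    by rewrite /= quotient_cyclic // quotientS.
  rewrite /= quotient_cycle // -cy -quotient_cycle ?quotientS ?cycle_subG //.
  exact: groupM.
have TD : gval D \in T by rewrite !inE mcD eqD mcxN.
have ekD : k D = k <[x]>.
  by apply: injh0; rewrite ?imset_f // !h0k // /h eqD.
have : gval D \in k <[x]> by rewrite -ekD self_conj.
case/imsetP => g Gg eDg; exists g => //.
by rewrite -eDg.
Qed.

Theorem corollary4p6 (gT : finGroupType) (p : nat) (G N : {group gT}) :
  prime p -> p.-group G -> ~~ cyclic G ->
  N <| G -> N :!=: 1 ->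
  eta G = eta (G / N) ->
  (forall M : {group gT}, M <| G -> N \subset M \/ M \subset Gminus G) /\
  (forall x : gT, x \in G -> max_cyclic G <[x]> -> <[x]> <| G ->
     N \subset <[x]> /\ cyclic N).
Proof.
move=> _ _ _ nsNG _ eqeta.
have partI : forall M : {group gT}, M <| G -> N \subset M \/ M \subset Gminus G.
  move=> M nsMG.
  case: (boolP (M \subset Gminus G)) => [sMG | ]; first by right.
  case/subsetPn => x Mx nGx; left.
  have Gx : x \in G := subsetP (normal_sub nsMG) x Mx.
  have mcx : max_cyclic G <[x]> by move: nGx; rewrite inE Gx /= negbK.
  apply/subsetP => n Nn.
  have [g Gg xng] := key nsNG eqeta x n Gx mcx Nn.
  have : <[x]> :^ g \subset M.
    by rewrite -(normsP (normal_norm nsMG) g Gg) conjSg cycle_subG.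
  move/subsetP/(_ _ xng) => xnM.
  by rewrite -(groupMl n Mx).
split=> // x Gx mcx nxG.
have [sN | sM] := partI <[x]>%G nxG.
  by split=> //; apply: cyclicS sN (cycle_cyclic x).
have : x \in Gminus G by rewrite (subsetP sM) // cycle_id.
by rewrite inE Gx mcx.
Qed.
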